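(* Let $N\ge 1$. For all $p,q\in\mathcal P$ and every Pauli frame $B=\{(s_i,\tilde s_i)\}_{0\le i<N}$ on $N$ qubits, the relative support satisfies: (1) $\mathrm{Supp}(p,B)\ge 0$, and $\mathrm{Supp}(p,B)=0$ if and only if $p=I$ (the zero vector of $\mathcal P$); (2) $\mathrm{Supp}(p+q,B)\le \mathrm{Supp}(p,B)+\mathrm{Supp}(q,B)$; (3) $\mathrm{Supp}(p,\gamma\cdot B)=\mathrm{Supp}(p,B)$ for every $\gamma\in\bar E_N$ (acting by the backward action); (4) if $p\neq I$, then $\mathrm{Supp}(p,B)-1$ equals the minimum, over all vertices $[B']$ of the coarse-grained graph $[\mathrm{PFG}_N]$ such that some frame in the class $[B']$ has $p$ among its $2N$ entries, of the graph distance in $[\mathrm{PFG}_N]$ from $[B]$ to $[B']$.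
   Context: Pauli space: $\mathcal P$ is the set of $N$-qubit Pauli operators (tensor products of $I,X,Y,Z$) modulo overall phase; it is a $2N$-dimensional vector space over $\mathbb F_2$ with addition $p+q:=pq$ (mod phase) and zero element the identity $I$. The symplectic form $\lambda:\mathcal P\times\mathcal P\to\mathbb F_2$ is $\lambda(p,q)=0$ if $p,q$ commute and $1$ if they anticommute. A Pauli frame is an ordered tuple $B=\{(s_i,\tilde s_i)\}_{0\le i<N}$ of elements of $\mathcal P$ with $\lambda(s_i,s_j)=\lambda(\tilde s_i,\tilde s_j)=0$ and $\lambda(s_i,\tilde s_j)=\delta_{ij}$ for all $i,j$. The origin frame is $B_0=\{(Z_i,X_i)\}_i$. For a frame $B$ let $\phi_B:\mathcal P\to\mathcal P$ be the linear map with $\phi_B(Z_i)=s_i$, $\phi_B(X_i)=\tilde s_i$. The backward action of a Clifford unitary $V$ on a frame $B$ is $V\cdot B:=\{(\phi_B(V^\dagger Z_iV),\phi_B(V^\dagger X_iV))\}_i$ (conjugates taken modulo phase). Relative support: $\mathrm{Supp}(p,B)=\sum_i \big(\lambda(s_i,p)\vee\lambda(\tilde s_i,p)\big)\in\mathbb N$ ($\vee$ = logical OR, sum over integers). $\bar E_N$ is the group of actions on frames generated by the backward actions of $\mathrm{SWAP}_{ij}$, Hadamard $H_i$ and phase gate $P_i=R_Z(\pi/2)$ on qubit $i$, for all $i,j$. The equally entangled frame (EEF) class of $B$ is $[B]=\{\gamma\cdot B:\gamma\in\bar E_N\}$. The coarse-grained Pauli frame graph $[\mathrm{PFG}_N]$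 has the EEF classes as vertices, with $[B_1],[B_2]$ adjacent iff there are $B_1'\in[B_1]$, $B_2'\in[B_2]$ with $B_2'=\mathrm{CX}_{ij}\cdot B_1'$ for some qubits $i\ne j$; distances are unweighted graph distances. *)

(* Defs.v *)
From mathcomp Require Import all_boot.
Set Implicit Arguments. Unset Strict Implicit. Unset Printing Implicit Defensive.

(* N-qubit Pauli operators modulo phase = F_2^{2N}.
   A Pauli p is stored qubit-wise: (p i).1 = X-bit, (p i).2 = Z-bit
   (I = (0,0), X = (1,0), Z = (0,1), Y = (1,1)). *)
Definition pauli (N : nat) := {ffun 'I_N -> bool * bool}.

Definition pI (N : nat) : pauli N := [ffun _ => (false, false)].

(* addition p + q := pq (mod phase) *)
Definition padd N (p q : pauli N) : pauli N :=
  [ffun i => ((p i).1 (+) (q i).1, (p i).2 (+) (q i).2)].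

Definition pZ N (k : 'I_N) : pauli N :=
  [ffun j => if j == k then (false, true) else (false, false)].
Definition pX N (k : 'I_N) : pauli N :=
  [ffun j => if j == k then (true, false) else (false, false)].

(* symplectic form: true iff p and q anticommute *)
Definition lam N (p q : pauli N) : bool :=
  odd (\sum_(i < N) (((p i).1 && (q i).2) + ((p i).2 && (q i).1))).

(* an ordered tuple of pairs (s_i, s~_i); B i = (s_i, s~_i) *)
Definition frame (N : nat) := {ffun 'I_N -> pauli N * pauli N}.

Definition is_frame N (B : frame N) : Prop :=
  forall i j : 'I_N,
    [/\ lam (B i).1 (B j).1 = false,
        lam (B i).2 (B j).2 = false &
        lam (B i).1 (B j).2 = (i == j)].

(* the linear map phi_B with phi_B(Z_i) = s_i, phi_B(X_i) = s~_i *)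
Definition phi N (B : frame N) (p : pauli N) : pauli N :=
  \big[@padd N/pI N]_(i < N)
     padd (if (p i).2 then (B i).1 else pI N) (if (p i).1 then (B i).2 else pI N).

(* Conjugation maps p |-> V^dagger p V (mod phase) of the Clifford gates used. *)
Definition conjH N (i : 'I_N) (p : pauli N) : pauli N :=
  [ffun j => if j == i then ((p j).2, (p j).1) else p j].
(* phase gate P = R_Z(pi/2): Z -> Z, X -> Y (mod phase) *)
Definition conjP N (i : 'I_N) (p : pauli N) : pauli N :=
  [ffun j => if j == i then ((p j).1, (p j).2 (+) (p j).1) else p j].
Definition conjSWAP N (i j : 'I_N) (p : pauli N) : pauli N :=
  [ffun k => if k == i then p j else if k == j then p i else p k].
(* CX with control i, target j (i != j):
   X_i -> X_i X_j, Z_i -> Z_i, X_j -> X_j, Z_j -> Z_i Z_j *)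
Definition conjCX N (i j : 'I_N) (p : pauli N) : pauli N :=
  [ffun k => if k == i then ((p k).1, (p k).2 (+) (p j).2)
             else if k == j then ((p k).1 (+) (p i).1, (p k).2)
             else p k].

Definition act N (V : pauli N -> pauli N) (B : frame N) : frame N :=
  [ffun k => (phi B (V (pZ k)), phi B (V (pX k)))].

Inductive gen (N : nat) : Type :=
| GSwap of 'I_N & 'I_N
| GH of 'I_N
| GP of 'I_N.

Definition gen_conj N (g : gen N) : pauli N -> pauli N :=
  match g with
  | GSwap i j => conjSWAP i j
  | GH i => conjH i
  | GP i => conjP i
  end.

(* element of \bar E_N given as a word in the generators, acting on frames *)
Definition act_word N (w : seq (gen N)) (B : frame N) : frame N :=
  foldr (fun g C => act (gen_conj g) C) B w.

Definition eef N (B C : frame N) : Prop := exists w : seq (gen N), C = act_word w B.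

Definition pfg_adj N (B C : frame N) : Prop :=
  exists (B' C' : frame N) (i j : 'I_N),
    i != j /\ eef B B' /\ eef C C' /\ C' = act (conjCX i j) B'.

(* pfg_reach k B B' : there is a walk of length k from [B] to [B'] in [PFG_N],
   i.e. the graph distance from [B] to [B'] is at most k *)
Fixpoint pfg_reach N (k : nat) (B B' : frame N) : Prop :=
  match k with
  | 0 => eef B B'
  | k'.+1 => exists C : frame N, is_frame C /\ pfg_adj B C /\ pfg_reach k' C B'
  end.

Definition supp N (p : pauli N) (B : frame N) : nat :=
  \sum_(i < N) (lam (B i).1 p || lam (B i).2 p).

Definition has_entry N (p : pauli N) (B : frame N) : Prop :=
  exists i : 'I_N, p = (B i).1 \/ p = (B i).2.

Definition class_has_entry N (p : pauli N) (B' : frame N) : Prop :=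
  is_frame B' /\ exists B'', eef B' B'' /\ has_entry p B''.

(* Main.v *)
Require Import Defs.
From mathcomp Require Import all_boot.
Set Implicit Arguments. Unset Strict Implicit. Unset Printing Implicit Defensive.

Section S.
Variable N : nat.
Implicit Types (x y w p q : pauli N) (C : frame N).

Definition tb (u v : bool * bool) := (u.1 && v.2) (+) (u.2 && v.1).

Lemma lamE x y : lam x y = \big[addb/false]_(i < N) tb (x i) (y i).
Proof.
rewrite /lam (big_morph odd oddD (id2 := 0%N) (erefl false)); apply: eq_bigr => i _.
by rewrite oddD !oddb.
Qed.

Lemma lam_sym x y : lam x y = lam y x.
Proof.
rewrite !lamE; apply: eq_bigr => i _; rewrite /tb.
by case: (x i) => [[] []]; case: (y i) => [[] []].
Qed.

Lemma lam_paddl x y q : lam (padd x y) q = lam x q (+) lam y q.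
Proof.
rewrite !lamE -big_split; apply: eq_bigr => i _; rewrite /tb ffunE /=.
by case: (x i) => [[] []]; case: (y i) => [[] []]; case: (q i) => [[] []].
Qed.

Lemma lam_pIl q : lam (pI N) q = false.
Proof. by rewrite lamE big1 // => i _; rewrite ffunE. Qed.

Lemma lam_paddr x y q : lam q (padd x y) = lam q x (+) lam q y.
Proof. by rewrite !(lam_sym q) lam_paddl. Qed.

Lemma lam_pIr q : lam q (pI N) = false.
Proof. by rewrite lam_sym lam_pIl. Qed.

Lemma lam_pZ k w : lam (pZ k) w = (w k).1.
Proof.
rewrite lamE (bigD1 k) //= big1 ?addbF.
  by rewrite /tb ffunE eqxx /=; case: (w k) => [[] []].
by move=> i /negbTE ik; rewrite /tb ffunE ik.
Qed.

Lemma lam_pX k w : lam (pX k) w = (w k).2.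
Proof.
rewrite lamE (bigD1 k) //= big1 ?addbF.
  by rewrite /tb ffunE eqxx /=; case: (w k) => [[] []].
by move=> i /negbTE ik; rewrite /tb ffunE ik.
Qed.

Definition rr C q : pauli N := [ffun l => (lam (C l).1 q, lam (C l).2 q)].
Definition wt x : nat := \sum_(l < N) ((x l).1 || (x l).2).

Lemma suppE q C : supp q C = wt (rr C q).
Proof. by apply: eq_bigr => l _; rewrite ffunE. Qed.

Lemma lam_phi C x q : lam (phi C x) q = lam x (rr C q).
Proof.
rewrite /phi (big_morph (fun a => lam a q) (id1 := false) (op1 := addb)); last first.
- exact: lam_pIl.
- by move=> a b; rewrite lam_paddl.
rewrite lamE; apply: eq_bigr => l _; rewrite lam_paddl /tb ffunE /=.
case: (x l) => [[] []] /=; rewrite ?lam_pIl ?addbF //.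
by rewrite addbC.
Qed.


Lemma rr_s1 C l : is_frame C -> rr C (C l).1 = pZ l.
Proof.
move=> hC; apply/ffunP => m; rewrite !ffunE.
have [h1 _ h3] := hC m l; have [_ _ h3'] := hC l m.
rewrite h1 lam_sym h3' eq_sym; by case: (m == l).
Qed.

Lemma rr_s2 C l : is_frame C -> rr C (C l).2 = pX l.
Proof.
move=> hC; apply/ffunP => m; rewrite !ffunE.
have [_ h2 h3] := hC m l.
rewrite h2 h3; by case: (m == l).
Qed.

Lemma rr_phi C x : is_frame C -> rr C (phi C x) = x.
Proof.
move=> hC; apply/ffunP => l; rewrite ffunE.
rewrite (lam_sym (C l).1) (lam_sym (C l).2) !lam_phi rr_s1 // rr_s2 //.
rewrite lam_sym lam_pZ lam_sym lam_pX; by case: (x l).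
Qed.

Lemma rr_inj C : is_frame C -> injective (rr C).
Proof.
move=> hC.
have [g gK Kg] := injF_bij (can_inj (rr_phi (C := C) ^~ hC)).
have E : forall p, rr C p = g p.
  by move=> p; rewrite -{1}(Kg p) rr_phi.
move=> a b; rewrite !E => /(congr1 (phi C)); by rewrite !Kg.
Qed.

Lemma lam_phi2 C x y : is_frame C -> lam (phi C x) (phi C y) = lam x y.
Proof. by move=> hC; rewrite lam_phi rr_phi. Qed.

Definition sympl (V : pauli N -> pauli N) := forall x y, lam (V x) (V y) = lam x y.
Definition good V := sympl V /\ forall x, V (V x) = x.

Lemma frame_act V C : sympl V -> is_frame C -> is_frame (act V C).
Proof.
move=> hV hC i j; rewrite !ffunE /= !lam_phi2 // !hV.
rewrite lam_pZ lam_pX lam_pZ !ffunE.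
by case: (i == j).
Qed.

Lemma rr_act V C q : good V -> rr (act V C) q = V (rr C q).
Proof.
case=> hS hI; apply/ffunP => k; rewrite !ffunE /= !lam_phi.
rewrite -{1}(hI (rr C q)) -{2}(hI (rr C q)) !hS lam_pZ lam_pX.
by case: (V (rr C q) k).
Qed.


Lemma goodH i : good (conjH i).
Proof.
split.
- move=> x y; rewrite !lamE; apply: eq_bigr => k _; rewrite !ffunE.
  case: (k == i) => //; rewrite /tb.
  by case: (x k) => [[] []]; case: (y k) => [[] []].
- move=> x; apply/ffunP => k; rewrite !ffunE.
  by case: eqP => [->|_]; rewrite ?eqxx //; case: (x i).
Qed.

Lemma goodP i : good (conjP i).
Proof.
split.
- move=> x y; rewrite !lamE; apply: eq_bigr => k _; rewrite !ffunE.
  case: (k == i) => //; rewrite /tb.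
  by case: (x k) => [[] []]; case: (y k) => [[] []].
- move=> x; apply/ffunP => k; rewrite !ffunE.
  by case: eqP => [->|_]; rewrite ?eqxx //= addbK; case: (x i).
Qed.

Definition sw (i j k : 'I_N) := if k == i then j else if k == j then i else k.

Lemma swK i j : involutive (sw i j).
Proof.
move=> k; rewrite /sw.
case: (eqVneq k i) => [->|ki]; first by rewrite eqxx; case: eqP.
case: (eqVneq k j) => [->|kj]; first by rewrite eqxx.
by rewrite (negbTE ki) (negbTE kj).
Qed.

Lemma conjSWAPE i j x : conjSWAP i j x = [ffun k => x (sw i j k)].
Proof. by apply/ffunP => k; rewrite !ffunE /sw; case: (k == i); case: (k == j). Qed.

Lemma goodSWAP i j : good (conjSWAP i j).
Proof.
split.
- move=> x y; rewrite !conjSWAPE !lamE.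
  rewrite [RHS](reindex_inj (inv_inj (swK i j))); apply: eq_bigr => k _.
  by rewrite !ffunE.
- move=> x; apply/ffunP => k; by rewrite !conjSWAPE !ffunE swK.
Qed.

Lemma big2b (i j : 'I_N) (F : 'I_N -> bool) : i != j ->
  \big[addb/false]_k F k = F i (+) F j (+) \big[addb/false]_(k | (k != i) && (k != j)) F k.
Proof. by move=> ij; rewrite (bigD1 i) // (bigD1 j) 1?eq_sym //= addbA. Qed.

Lemma big2n (i j : 'I_N) (F : 'I_N -> nat) : i != j ->
  \sum_k F k = F i + F j + \sum_(k | (k != i) && (k != j)) F k.
Proof. by move=> ij; rewrite (bigD1 i) // (bigD1 j) 1?eq_sym //= addnA. Qed.

Lemma CXi i j x : conjCX i j x i = ((x i).1, (x i).2 (+) (x j).2).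
Proof. by rewrite ffunE eqxx. Qed.
Lemma CXj i j x : i != j -> conjCX i j x j = ((x j).1 (+) (x i).1, (x j).2).
Proof. by move=> ij; rewrite ffunE eq_sym (negbTE ij) eqxx. Qed.
Lemma CXk i j x k : k != i -> k != j -> conjCX i j x k = x k.
Proof. by move=> ki kj; rewrite ffunE (negbTE ki) (negbTE kj). Qed.

Lemma goodCX i j : i != j -> good (conjCX i j).
Proof.
move=> ij; split.
- move=> x y; rewrite !lamE !(big2b _ ij) !CXi !CXj //.
  rewrite (eq_bigr (fun k => tb (x k) (y k))); last first.
    by move=> k /andP[ki kj]; rewrite !CXk.
  congr (_ (+) _); rewrite /tb /=.
  by case: (x i) => [[] []]; case: (y i) => [[] []];
     case: (x j) => [[] []]; case: (y j) => [[] []].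
- move=> x; apply/ffunP => k.
  case: (eqVneq k i) => [->|ki].
    by rewrite !CXi CXj //= addbK; case: (x i).
  case: (eqVneq k j) => [->|kj].
    by rewrite !CXj // CXi /= addbK; case: (x j).
  by rewrite !CXk.
Qed.

Lemma good_gen (g : gen N) : good (gen_conj g).
Proof. case: g => [i j|i|i] /=; [exact: goodSWAP|exact: goodH|exact: goodP]. Qed.

Lemma wt_gen (g : gen N) x : wt (gen_conj g x) = wt x.
Proof.
case: g => [i j|i|i] /=.
- rewrite conjSWAPE /wt (reindex_inj (inv_inj (swK i j))); apply: eq_bigr => k _.
  by rewrite ffunE swK.
- apply: eq_bigr => k _; rewrite ffunE; case: (k == i) => //=; by rewrite orbC.
- apply: eq_bigr => k _; rewrite ffunE; case: (k == i) => //=.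
  by case: (x k) => [[] []].
Qed.

Definition cw (ws : seq (gen N)) x := foldr (fun g y => gen_conj g y) x ws.

Lemma rr_word ws C q : rr (act_word ws C) q = cw ws (rr C q).
Proof. by elim: ws => //= g ws IH; rewrite rr_act ?IH //; exact: good_gen. Qed.

Lemma frame_word ws C : is_frame C -> is_frame (act_word ws C).
Proof. by move=> hC; elim: ws => //= g ws IH; apply: frame_act => //; case: (good_gen g). Qed.

Lemma wt_cw ws x : wt (cw ws x) = wt x.
Proof. by elim: ws => //= g ws IH; rewrite wt_gen. Qed.

Lemma supp_word ws C q : supp q (act_word ws C) = supp q C.
Proof. by rewrite !suppE rr_word wt_cw. Qed.

Lemma wt_CX i j x : i != j -> wt x <= (wt (conjCX i j x)).+1.
Proof.
move=> ij; rewrite /wt !(big2n _ ij) CXi CXj //.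
have -> : \sum_(k | (k != i) && (k != j)) ((conjCX i j x k).1 || (conjCX i j x k).2)
  = \sum_(k | (k != i) && (k != j)) ((x k).1 || (x k).2).
  by apply: eq_bigr => k /andP[ki kj]; rewrite CXk.
rewrite -addSn leq_add2r /=.
by case: (x i) => [[] []]; case: (x j) => [[] []].
Qed.


Lemma sum_pos (P : pred 'I_N) (b : 'I_N -> bool) :
  0 < \sum_(k | P k) b k -> exists k, P k && b k.
Proof.
move=> H; case: (pickP (fun k => P k && b k)) => [k hk|h]; first by exists k.
exfalso; move: H; rewrite big1 // => k Pk; by move: (h k); rewrite Pk /= => ->.
Qed.

Lemma normalize w j : w j != (false, false) ->
  exists ws, cw ws w = [ffun k => if k == j then (true, false) else w k].
Proof.
case E: (w j) => [[] []] // _.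
- exists [:: GP j]; apply/ffunP => k; rewrite /= !ffunE.
  by case: eqP => [->|] //; rewrite E.
- exists [::]; apply/ffunP => k; rewrite /= !ffunE.
  by case: eqP => [->|] //; rewrite E.
- exists [:: GH j]; apply/ffunP => k; rewrite /= !ffunE.
  by case: eqP => [->|] //; rewrite E.
Qed.

Lemma wt_pZ i : wt (pZ i) = 1.
Proof.
rewrite /wt (bigD1 i) //= big1; first by rewrite ffunE eqxx.
by move=> k /negbTE ki; rewrite ffunE ki.
Qed.

Lemma wt_pX i : wt (pX i) = 1.
Proof.
rewrite /wt (bigD1 i) //= big1; first by rewrite ffunE eqxx.
by move=> k /negbTE ki; rewrite ffunE ki.
Qed.

Lemma lower p : forall k C B', pfg_reach k C B' -> class_has_entry p B' ->
  supp p C <= k.+1.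
Proof.
elim=> [|k IH] C B' /=.
- case=> ws -> [hB' [B'' [[ws' ->] [i hi]]]].
  rewrite -(supp_word ws) -(supp_word ws') suppE.
  have hF := frame_word ws' hB'.
  by case: hi => ->; rewrite ?rr_s1 ?rr_s2 ?wt_pZ ?wt_pX.
- case=> [D [hD [[B1 [D' [i [j [ij [[ws1 ->] [[ws2 hD'] E]]]]]]] hr]]] hc.
  have := IH D B' hr hc.
  move=> h; rewrite -(supp_word ws1) suppE; apply: leq_trans (wt_CX (rr (act_word ws1 C) p) ij) _.
  have e : rr D' p = conjCX i j (rr (act_word ws1 C) p) by rewrite E rr_act //; exact: goodCX.
  by rewrite -e hD' -suppE supp_word.
Qed.

Lemma upper p : forall n C, is_frame C -> supp p C = n.+1 ->
  exists B', class_has_entry p B' /\ pfg_reach n C B'.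
Proof.
elim=> [|n IH] C hC.
- rewrite suppE => hw.
  have [i /= hi] : exists i, true && ((rr C p i).1 || (rr C p i).2).
    by apply: (sum_pos (P := xpredT)); rewrite -/(wt _) hw.
  have rest : forall k, k != i -> rr C p k = (false, false).
    move=> k ki; move: hw; rewrite /wt (bigD1 i) //= hi.
    rewrite (bigD1 k) //=; case: (rr C p k) => [[] []] //=.
  have nz : rr C p i != (false, false) by move: hi; case: (rr C p i) => [[] []].
  have [ws hws] := normalize nz.
  set B'' := act_word ws C.
  have hF : is_frame B'' := frame_word ws hC.
  have hp : p = (B'' i).2.
    apply: (rr_inj hF); rewrite rr_s2 // rr_word hws.
    apply/ffunP => k; rewrite !ffunE.
    case: ifP => // /negbT ki.
    by move: (rest k ki); rewrite ffunE.
  exists C; split; last by exists [::].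
  split => //; exists B''; split; first by exists ws.
  by exists i; right.
- rewrite suppE => hw.
  set w := rr C p in hw.
  have [i /= hi] : exists i, true && ((w i).1 || (w i).2).
    by apply: (sum_pos (P := xpredT)); rewrite -/(wt _) hw.
  have [j /andP [ji hj]] : exists j, (j != i) && ((w j).1 || (w j).2).
    apply: sum_pos; move: hw; rewrite /wt (bigD1 i) //= hi.
    by rewrite add1n => -[->].
  have ij : i != j by rewrite eq_sym.
  have nzj : w j != (false, false) by move: hj; case: (w j) => [[] []].
  have [ws1 h1] := normalize nzj.
  set e1 := [ffun k => _] in h1.
  have nzi : e1 i != (false, false).
    by rewrite ffunE (negbTE ij); move: hi; case: (w i) => [[] []].
  have [ws2 h2] := normalize nzi.
  set e2 := [ffun k => _] in h2.
  set B1 := act_word (ws2 ++ ws1) C.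
  have hB1 : rr B1 p = e2 by rewrite rr_word /cw foldr_cat -/(cw _ _) -/(cw _ _) h1 h2.
  set D := act (conjCX i j) B1.
  have hF1 : is_frame B1 := frame_word _ hC.
  have hD : is_frame D by apply: frame_act => //; case: (goodCX ij).
  have e2i : e2 i = (true, false) by rewrite ffunE eqxx.
  have e2j : e2 j = (true, false) by rewrite !ffunE (negbTE ji) eqxx.
  have hCX : conjCX i j e2 = [ffun k => if k == j then (false, false) else e2 k].
    apply/ffunP => k; rewrite [RHS]ffunE.
    case: (eqVneq k i) => [->|ki]; first by rewrite CXi (negbTE ij) e2i e2j.
    case: (eqVneq k j) => [->|kj]; first by rewrite CXj // e2i e2j.
    by rewrite CXk.
  have hwe2 : wt e2 = n.+2 by rewrite -hB1 -suppE supp_word suppE.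
  have hsD : supp p D = n.+1.
    rewrite suppE rr_act; last exact: goodCX.
    rewrite hB1 hCX.
    rewrite /wt (bigD1 j) //= ffunE eqxx add0n.
    move: hwe2; rewrite /wt (bigD1 j) //= e2j add1n => -[<-].
    by apply: eq_bigr => k kj; rewrite ffunE (negbTE kj).
  have [B' [hc hr]] := IH D hD hsD.
  exists B'; split => //; exists D; split => //; split => //.
  exists B1, D, i, j; split => //; split; first by exists (ws2 ++ ws1).
  by split => //; exists [::].
Qed.

End S.

Theorem proposition1 (N : nat) (hN : (0 < N)%N) (p q : pauli N) (B : frame N)
  (hB : is_frame B) :
  [/\ (0 <= supp p B)%N /\ (supp p B = 0%N <-> p = pI N),
      (supp (padd p q) B <= supp p B + supp q B)%N,
      (forall w : seq (gen N), supp p (act_word w B) = supp p B) &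
      (p <> pI N ->
        (exists B' : frame N, class_has_entry p B' /\ pfg_reach (supp p B - 1) B B') /\
        (forall (B' : frame N) (k : nat),
            class_has_entry p B' -> pfg_reach k B B' -> (supp p B - 1 <= k)%N))].
Proof.
have P1 : supp p B = 0%N <-> p = pI N.
  split.
  - move=> h0; apply: (rr_inj hB); apply/ffunP => l.
    move: h0; rewrite /supp (bigD1 l) //= => /eqP; rewrite addn_eq0 => /andP[t _].
    rewrite !ffunE !lam_pIr; move: t.
    by case: (lam (B l).1 p); case: (lam (B l).2 p).
  - by move=> ->; rewrite /supp big1 // => l _; rewrite !lam_pIr.
split => //.
- rewrite /supp -big_split; apply: leq_sum => l _; rewrite !lam_paddr.
  by case: (lam (B l).1 p); case: (lam (B l).2 p); case: (lam (B l).1 q); case: (lam (B l).2 q).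
- by move=> w; apply: supp_word.
- move=> hp; have hs : supp p B != 0%N by apply/eqP => /P1.
  split.
  + move: hs; case E: (supp p B) => [|n] // _; rewrite subn1 /=.
    exact: upper.
  + move=> B' k hc hr; have := lower hr hc.
    by rewrite leq_subLR add1n.
Qed.
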